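(* Let $E$ be a real Hilbert space with $\dim(E)\ge2$, $h\in E$ a unit vector, $H^+=\{x\in E\mid (h,x)>0\}$, and define $\preceq$ on $H^+$ by $x\preceq y\iff\|x-y_\perp\|\le y_h$. If $x,y\in H^+$ satisfy $x\preceq y$ and $x\ne y$, then $\ln(x_h)<\ln(y_h)$.
   Context: For $x\in E$, $x_h=(h,x)$ and $x_\perp=x-(h,x)h$. *)

(* Defs.v *)
From HB Require Import structures.
From mathcomp Require Import all_boot all_order all_algebra.
From mathcomp Require Import all_classical all_reals all_analysis.
Set Implicit Arguments. Unset Strict Implicit. Unset Printing Implicit Defensive.
Import Order.TTheory GRing.Theory Num.Theory.
Import numFieldNormedType.Exports.
Local Open Scope ring_scope.

Definition is_inner_product (R : realType) (E : normedModType R)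
  (ip : E -> E -> R) : Prop :=
  [/\ (forall x y : E, ip x y = ip y x),
      (forall (a : R) (x y z : E), ip (a *: x + y) z = a * ip x z + ip y z)
    & (forall x : E, `|x| = Num.sqrt (ip x x))].

Definition dim_ge2 (R : realType) (E : normedModType R) : Prop :=
  exists u v : E, forall a b : R, a *: u + b *: v = 0 -> a = 0 /\ b = 0.

Definition comp_h (R : realType) (E : normedModType R) (ip : E -> E -> R)
  (h x : E) : R := ip h x.

Definition comp_perp (R : realType) (E : normedModType R) (ip : E -> E -> R)
  (h x : E) : E := x - (ip h x) *: h.

Definition Hplus (R : realType) (E : normedModType R) (ip : E -> E -> R)
  (h : E) : set E := [set x | 0 < ip h x].

Definition prec (R : realType) (E : normedModType R) (ip : E -> E -> R)
  (h x y : E) : Prop := `|x - comp_perp ip h y| <= comp_h ip h y.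

(* Main.v *)
Require Import Defs.
From HB Require Import structures.
From mathcomp Require Import all_boot all_order all_algebra.
From mathcomp Require Import all_classical all_reals all_analysis.
From mathcomp Require Import lra.
Import Order.TTheory GRing.Theory Num.Theory.
Import numFieldNormedType.Exports.
Local Open Scope ring_scope.

Theorem mainTheorem19 (R : realType) (E : completeNormedModType R)
  (ip : E -> E -> R) (Hip : is_inner_product ip) (Hdim : dim_ge2 E)
  (h : E) (Hh : `|h| = 1) (x y : E)
  (Hx : Hplus ip h x) (Hy : Hplus ip h y)
  (Hxy : prec ip h x y) (Hneq : x <> y) :
  ln (comp_h ip h x) < ln (comp_h ip h y).
Proof.
case: Hip => Hs Hl Hn.
have ip0 : forall z, ip 0 z = 0.
  move=> z; have := Hl 1 0 0 z; rewrite scale1r addr0 mul1r.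
  by move=> /(congr1 (fun t => t - ip 0 z)); rewrite subrr addrK.
have ipD : forall u v z, ip (u + v) z = ip u z + ip v z.
  by move=> u v z; rewrite -[u in LHS]scale1r Hl mul1r.
have ipZ : forall a u z, ip (a *: u) z = a * ip u z.
  by move=> a u z; rewrite -[_ *: u]addr0 Hl ip0 addr0.
have ipN : forall u z, ip (- u) z = - ip u z.
  by move=> u z; rewrite -scaleN1r ipZ mulN1r.
have ipDr : forall u v z, ip z (u + v) = ip z u + ip z v.
  by move=> u v z; rewrite Hs ipD (Hs u) (Hs v).
have ipZr : forall a u z, ip z (a *: u) = a * ip z u.
  by move=> a u z; rewrite Hs ipZ Hs.
have ipNr : forall u z, ip z (- u) = - ip z u.
  by move=> u z; rewrite Hs ipN Hs.
have ipsq : forall u, ip u u = `|u| ^+ 2.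
  move=> u; have [->|u0] := eqVneq u 0; first by rewrite ip0 normr0 expr0n.
  have : 0 < `|u| by rewrite normr_gt0.
  rewrite Hn sqrtr_gt0 => hp; rewrite sqr_sqrtr //; exact: ltW.
have hh : ip h h = 1 by rewrite ipsq Hh expr1n.
rewrite /Hplus /= in Hx Hy; rewrite /prec /comp_h /comp_perp in Hxy *.
set a := ip h x in Hx Hxy *; set b := ip h y in Hy Hxy *.
rewrite ltr_ln ?posrE //.
set w := x - y + (b - a) *: h.
have dE : x - (y - b *: h) = w + a *: h.
  by rewrite /w scalerBl -[RHS]addrA subrK opprB [b *: h - y]addrC addrA.
have wh : ip w h = 0.
  rewrite /w !ipD ipN ipZ hh (Hs x h) (Hs y h) -/a -/b; lra.
have wE : w = x - y + (b - a) *: h by [].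
clearbody w.
have key : `|x - (y - b *: h)| ^+ 2 = `|w| ^+ 2 + a ^+ 2.
  rewrite -ipsq dE ipD !ipDr !ipZr !ipZ hh (Hs h w) wh ipsq; lra.
have hb : `|x - (y - b *: h)| ^+ 2 <= b ^+ 2.
  rewrite ler_sqr ?nnegrE //; exact: ltW.
rewrite key in hb.
rewrite ltNge; apply/negP => hab.
have hw0 := sqr_ge0 `|w|.
have hw : `|w| ^+ 2 <= 0 by nra.
have w0 : w = 0.
  apply/eqP; rewrite -normr_eq0 -(sqrf_eq0 (`|w|)) eq_le hw hw0.
  done.
have ab : a = b by nra.
apply: Hneq; apply/eqP; rewrite -subr_eq0; apply/eqP.
by move: w0; rewrite wE ab subrr scale0r addr0.
Qed.
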